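(* Let $G$ be a simple loopless graph on $[L]$ and $p\ge1$. For each $v\in[L]$ let $|c^*(v)|$ denote the size of the largest clique in $G$ containing $v$. For any Dyck path $\varepsilon\in D_{2p}$ and any labelling $i=(i_k)_{k\in\varepsilon^\uparrow}\in[L]^{\varepsilon^\uparrow}$, \[ |\mathcal{P}^{(\varepsilon)}_{2p}(G,i)|\le\min\Big\{\prod_{k\in\varepsilon^\uparrow}|c^*(i_k)|,\ p!\Big\}. \] In particular, $|\mathcal{P}^{(\varepsilon)}_{2p}(G,i)|\le\min(\omega(G)^p,p!)$, where $\omega(G)$ is the clique number of $G$.
   Context: $\mathcal{T}(G)=\langle v\in[L]: uv=vu \text{ for } (u,v)\in E(G)\rangle$ is the trace monoid of $G$ (words in letters $[L]$ modulo commutation of adjacent letters), $e$ the empty word, $|w|$ the length of $w$. Words are adjacent, $w_1\leftrightarrow w_2$, if $w_1=vw_2$ or $w_2=vw_1$ for a letter $v\in[L]$. $\mathcal{P}_{2p}(G)=\{w\in\mathcal{T}(G)^{2p}: e\leftrightarrow w_1\leftrightarrow\cdots\leftrightarrow w_{2p}=e\}$. $D_{2p}$ is the set of Dyck paths $\varepsilon\in\{+1,-1\}^{2p}$ (all partial sums nonnegative, total sum zero); $\varepsilon^\uparrow=\{k:\varepsilon_k=+1\}$. For $w\in\mathcal{P}_{2p}(G)$, with $w_0:=e$, define $\varepsilon(w)_k=+1$ if $|w_k|>|w_{k-1}|$ and $-1$ otherwise; this is a Dyck path. $\mathcal{P}^{(\varepsilon)}_{2p}(G)=\{w\in\mathcal{P}_{2p}(G):\varepsilon(w)=\varepsilon\}$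 and, for $i\in[L]^{\varepsilon^\uparrow}$, $\mathcal{P}^{(\varepsilon)}_{2p}(G,i)=\{w\in\mathcal{P}^{(\varepsilon)}_{2p}(G): w_k=i_kw_{k-1}\text{ for all }k\in\varepsilon^\uparrow\}$. *)

(* Defs.v *)
From mathcomp Require Import all_boot.
Set Implicit Arguments. Unset Strict Implicit. Unset Printing Implicit Defensive.

Section Trace.
Variables (L : nat) (G : rel 'I_L).

(* Words are sequences of letters in [L] = 'I_L (left letter = first letter).
   One commutation step: swap two adjacent letters a b with (a,b) an edge. *)
Definition tstep (w1 w2 : seq 'I_L) : Prop :=
  exists (x y : seq 'I_L) (a b : 'I_L),
    w1 = x ++ a :: b :: y /\ w2 = x ++ b :: a :: y /\ G a b.

(* Equality in the trace monoid T(G): reflexive-transitive closure of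
   commutation steps (an equivalence when G is symmetric). *)
Inductive trace_eq : seq 'I_L -> seq 'I_L -> Prop :=
| trace_eq_refl w : trace_eq w w
| trace_eq_step w1 w2 w3 : tstep w1 w2 -> trace_eq w2 w3 -> trace_eq w1 w3.

Definition tadj (w1 w2 : seq 'I_L) : Prop :=
  exists v : 'I_L, trace_eq w1 (v :: w2) \/ trace_eq w2 (v :: w1).

(* Dyck paths of length 2p, encoded as eps : seq bool of size 2p,
   where eps_k = +1 iff nth false eps (k-1) = true  (k = 1..2p). *)
Definition dyck (p : nat) (eps : seq bool) : Prop :=
  size eps = p.*2 /\
  (forall j, j <= p.*2 -> count negb (take j eps) <= count id (take j eps)) /\
  count id eps = count negb eps.

Definition eps_at (eps : seq bool) (k : nat) : bool := nth false eps k.-1.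

(* w : nat -> seq 'I_L represents (w_0, ..., w_{2p}); only k <= 2p matter.
   Membership in P^{(eps)}_{2p}(G, i); i : nat -> 'I_L, only its values at
   up-steps k (eps_k = +1) matter. *)
Definition in_Peps (p : nat) (eps : seq bool) (i : nat -> 'I_L)
    (w : nat -> seq 'I_L) : Prop :=
  trace_eq (w 0) [::] /\ trace_eq (w p.*2) [::] /\
  (forall k, 1 <= k <= p.*2 -> tadj (w k.-1) (w k)) /\
  (forall k, 1 <= k <= p.*2 -> (size (w k.-1) < size (w k)) = eps_at eps k) /\
  (forall k, 1 <= k <= p.*2 -> eps_at eps k -> trace_eq (w k) (i k :: w k.-1)).

Definition path_eq (p : nat) (w w' : nat -> seq 'I_L) : Prop :=
  forall k, k <= p.*2 -> trace_eq (w k) (w' k).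

Definition distinct_paths_in (p : nat) (eps : seq bool) (i : nat -> 'I_L)
    (ws : seq (nat -> seq 'I_L)) : Prop :=
  (forall a, a < size ws -> in_Peps p eps i (nth (fun _ => [::]) ws a)) /\
  (forall a b, a < size ws -> b < size ws -> a != b ->
     ~ path_eq p (nth (fun _ => [::]) ws a) (nth (fun _ => [::]) ws b)).

Definition clique (S : {set 'I_L}) : bool :=
  [forall u in S, forall v in S, (u != v) ==> G u v].

Definition cstar (v : 'I_L) : nat :=
  \max_(S : {set 'I_L} | clique S && (v \in S)) #|S|.

Definition clique_number : nat := \max_(S : {set 'I_L} | clique S) #|S|.

End Trace.

(* Main.v *)
Require Import Defs.
From mathcomp Require Import all_boot zify.
From Stdlib Require Import ClassicalEpsilon.
Set Implicit Arguments. Unset Strict Implicit. Unset Printing Implicit Defensive.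

Definition bP (P : Prop) : bool := if excluded_middle_informative P then true else false.
Lemma bPP P : reflect P (bP P).
Proof. rewrite /bP; case: excluded_middle_informative => h; constructor; done. Qed.

Lemma tstep_sym L (G : rel 'I_L) : symmetric G -> forall a b, tstep G a b -> tstep G b a.
Proof.
move=> Gs a b [x [y [c [d [-> [-> h]]]]]].
exists x, y, d, c; split=> //; split=> //; by rewrite Gs.
Qed.

Lemma trace_trans L (G : rel 'I_L) a b c : trace_eq G a b -> trace_eq G b c -> trace_eq G a c.
Proof. elim=> // w1 w2 w3 s _ IH h; exact: trace_eq_step s (IH h). Qed.

Lemma trace_sym L (G : rel 'I_L) : symmetric G -> forall a b, trace_eq G a b -> trace_eq G b a.
Proof.
move=> Gs a b; elim=> [w|w1 w2 w3 s _ IH]; first exact: trace_eq_refl.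
apply: trace_trans IH _; exact: trace_eq_step (tstep_sym Gs s) (trace_eq_refl _ _).
Qed.

Lemma trace_perm L (G : rel 'I_L) a b : trace_eq G a b -> perm_eq a b.
Proof.
elim=> [w|w1 w2 w3 s _ IH]; first exact: perm_refl.
apply: perm_trans IH; case: s => [x [y [c [d [-> [-> _]]]]]].
rewrite perm_cat2l; apply/permP => q /=; by rewrite addnCA.
Qed.

Lemma trace_size L (G : rel 'I_L) a b : trace_eq G a b -> size a = size b.
Proof. by move/trace_perm/perm_size. Qed.

Lemma trace_cons L (G : rel 'I_L) v a b : trace_eq G a b -> trace_eq G (v :: a) (v :: b).
Proof.
elim=> [w|w1 w2 w3 s _ IH]; first exact: trace_eq_refl.
apply: trace_eq_step IH; case: s => [x [y [c [d [-> [-> h]]]]]].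
by exists (v :: x), y, c, d.
Qed.

Lemma rem_cat' (T : eqType) (v : T) x s :
  rem v (x ++ s) = if v \in x then rem v x ++ s else x ++ rem v s.
Proof.
elim: x => [|y x IH] //=; rewrite in_cons eq_sym; idtac.
case: (v =P y) => //= _; rewrite IH; by case: (v \in x).
Qed.

Lemma trace_rem L (G : rel 'I_L) : irreflexive G -> forall v a b,
  trace_eq G a b -> trace_eq G (rem v a) (rem v b).
Proof.
move=> Gi v a b; elim=> [w|w1 w2 w3 s _ IH]; first exact: trace_eq_refl.
apply: trace_trans IH; case: s => [x [y [c [d [-> [-> h]]]]]].
have cd : c != d by apply/eqP => e; move: h; rewrite e Gi.
rewrite !rem_cat'; case: (v \in x).
  by apply: trace_eq_step (trace_eq_refl _ _); exists (rem v x), y, c, d.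
rewrite /=; case: (c =P v) => [e|ne].
  rewrite -e eq_sym (negbTE cd); exact: trace_eq_refl.
case: (d =P v) => [e|ne2]; first exact: trace_eq_refl.
by apply: trace_eq_step (trace_eq_refl _ _); exists x, (rem v y), c, d.
Qed.

Lemma trace_cancel L (G : rel 'I_L) : irreflexive G -> forall v a b,
  trace_eq G (v :: a) (v :: b) -> trace_eq G a b.
Proof. move=> Gi v a b /(trace_rem Gi v) /=; by rewrite eqxx. Qed.

Lemma trace_levi L (G : rel 'I_L) : symmetric G -> irreflexive G -> forall u v a b,
  trace_eq G (u :: a) (v :: b) -> u != v -> G u v.
Proof.
move=> Gs Gi u v a b h uv; apply/negPn/negP => nG.
pose q := fun x : 'I_L => (x == u) || (x == v).
have key : forall w1 w2, trace_eq G w1 w2 -> filter q w1 = filter q w2.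
  move=> w1 w2; elim=> // x1 x2 x3 s _ <-.
  case: s => [x [y [c [d [-> [-> hcd]]]]]].
  rewrite !filter_cat /=; congr (_ ++ _).
  have cd : c != d by apply/eqP => e; move: hcd; rewrite e Gi.
  rewrite /q; case: (c =P u) => [ec|nec]; case: (c =P v) => [ec'|nec'];
    case: (d =P u) => [ed|ned]; case: (d =P v) => [ed'|ned'] //=;
    subst; try by rewrite eqxx in cd.
  - by rewrite hcd in nG.
  - by rewrite Gs hcd in nG.
have := key _ _ h; rewrite /= /q !eqxx /= orbT => [[e]].
by rewrite e eqxx in uv.
Qed.

Definition stepc L (G : rel 'I_L) eps (i : nat -> 'I_L) (w : nat -> seq 'I_L) j :=
  tadj G (w j.-1) (w j) /\ (size (w j.-1) < size (w j)) = eps_at eps j /\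
  (eps_at eps j -> trace_eq G (w j) (i j :: w j.-1)).
Definition okfrom L (G : rel 'I_L) n eps i k w :=
  trace_eq G (w n) [::] /\ forall j, k < j <= n -> @stepc L G eps i w j.
Definition eqfrom L (G : rel 'I_L) n k (a b : nat -> seq 'I_L) :=
  forall j, k <= j <= n -> trace_eq G (a j) (b j).

Lemma tadj_size L (G : rel 'I_L) a b : tadj G a b ->
  size b = (size a).+1 \/ size a = (size b).+1.
Proof. by case=> v [] /trace_size /= ->; [right|left]. Qed.

Lemma size_prof L (G : rel 'I_L) n eps i w : size eps = n -> forall m k, k + m = n ->
  okfrom G n eps i k w ->
  size (w k) + count id (drop k eps) = count negb (drop k eps).
Proof.
move=> Hsz; elim=> [|m IH] k.
  rewrite addn0 => hk [h0 _]; rewrite drop_oversize ?Hsz ?hk //.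
  by rewrite (trace_size h0).
move=> hk ok; have kn : k < n by lia.
have ok' : okfrom G n eps i k.+1 w.
  by split; [exact: ok.1| move=> j hj; apply: ok.2; lia].
have E := IH k.+1 ltac:(lia) ok'.
have [hadj [hsz _]] := ok.2 k.+1 ltac:(lia).
rewrite /= in hadj hsz; rewrite (drop_nth false (n := k)) ?Hsz // /=.
have := tadj_size hadj; rewrite /eps_at /= in hsz.
case: (nth false eps k) hsz => /= hsz.
  move: hsz => /idP hsz; lia.
move: hsz => /negbT; rewrite -leqNgt => hsz; lia.
Qed.

Lemma size_le_sum_filter (T : Type) n (P : 'I_n -> pred T) s :
  all (fun x => [exists v, P v x]) s -> size s <= \sum_v size (filter (P v) s).
Proof.
elim: s => [|x s IH] //=.
case/andP => /existsP [v Pv] /IH h.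
rewrite (eq_bigr (fun v => P v x + size (filter (P v) s))); last first.
  by move=> u _; case: (P u x).
rewrite big_split /= -add1n leq_add //.
by rewrite (bigD1 v) //= Pv.
Qed.

Lemma pairwise_sub_all (T : Type) (Q : pred T) (r r' : rel T) s :
  all Q s -> pairwise r s -> (forall a b, Q a -> Q b -> r a b -> r' a b) ->
  pairwise r' s.
Proof.
move=> hQ hr H; elim: s hQ hr => [|x s IH] //= /andP [Qx Qs] /andP [rx rs].
rewrite IH // andbT; move: Qs rx; elim: s {IH rs} => [|y s IH] //= /andP [Qy Qs] /andP [rxy rxs].
by rewrite H // IH.
Qed.

Lemma all_filter_and (T : Type) (Q p : pred T) s :
  all Q s -> all (fun x => Q x && p x) (filter p s).
Proof. elim: s => [|x s IH] //= /andP [Qx Qs]; case px: (p x) => /=; rewrite ?Qx ?px IH //. Qed.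

Lemma gen L (G : rel 'I_L) (Gsym : symmetric G) (Girr : irreflexive G) n eps i
  (f : seq 'I_L -> nat -> nat)
  (Hsz : size eps = n)
  (H1 : forall t k, 0 < f t k)
  (Hup : forall k t, k < n -> eps_at eps k.+1 -> f (i k.+1 :: t) k.+1 <= f t k)
  (Hdn : forall k t (g : 'I_L -> seq 'I_L) (C : {set 'I_L}), k < n -> ~~ eps_at eps k.+1 ->
     size t + count id (drop k eps) = count negb (drop k eps) ->
     (forall v, v \in C -> trace_eq G t (v :: g v)) ->
     \sum_(v in C) f (g v) k.+1 <= f t k) :
  forall m k t ws, k + m = n ->
   all (fun w => bP (okfrom G n eps i k w /\ trace_eq G (w k) t)) ws ->
   pairwise (fun a b => bP (~ eqfrom G n k a b)) ws ->
   size ws <= f t k.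
Proof.
elim=> [|m IH] k t ws.
  rewrite addn0 => <-; case: ws => [|a [|b ws]] //= hall hpw; try exact: H1.
  exfalso; move: hall hpw => /and3P [/bPP [_ ha] /bPP [_ hb] _] /andP [/andP [/bPP hab _] _].
  apply: hab => j /andP [h1 h2]; have -> : j = k by lia.
  apply: trace_trans ha (trace_sym Gsym hb).
move=> hk hall hpw; have kn : k < n by lia.
have okS : forall w, okfrom G n eps i k w -> okfrom G n eps i k.+1 w.
  by move=> w ok; split; [exact: ok.1| move=> j hj; apply: ok.2; lia].
have eqS : forall a b, bP (okfrom G n eps i k a /\ trace_eq G (a k) t) ->
    bP (okfrom G n eps i k b /\ trace_eq G (b k) t) ->
    eqfrom G n k.+1 a b -> eqfrom G n k a b.
  move=> a b /bPP [_ ha] /bPP [_ hb] e j /andP [h1 h2].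
  case: (j =P k) => [->|ne]; first exact: trace_trans ha (trace_sym Gsym hb).
  apply: e; lia.
case he: (eps_at eps k.+1).
  apply: leq_trans (Hup _ _ kn he); apply: (IH k.+1) => //; first lia.
    apply: sub_all hall => w /bPP [ok hw]; apply/bPP; split; first exact: okS.
    have [_ [_ hu]] := ok.2 k.+1 ltac:(lia).
    exact: trace_trans (hu he) (trace_cons _ hw).
  apply: pairwise_sub_all hall hpw _ => a b Qa Qb /bPP nab; apply/bPP => e.
  exact: nab (eqS _ _ Qa Qb e).
pose Pv v w := bP (trace_eq G (w k) (v :: w k.+1)).
have hex : all (fun w => [exists v, Pv v w]) ws.
  apply: sub_all hall => w /bPP [ok hw].
  have [hadj [hsz _]] := ok.2 k.+1 ltac:(lia).
  rewrite /= he in hadj hsz; case: hadj => v [hv|hv].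
    by apply/existsP; exists v; apply/bPP.
  by move: hsz; rewrite (trace_size hv) /= ltnSn.
apply: leq_trans (size_le_sum_filter hex) _.
pose C := [set v | 0 < size (filter (Pv v) ws)].
pose x0 := fun _ : nat => [::] : seq 'I_L.
pose g v := (nth x0 (filter (Pv v) ws) 0) k.+1.
rewrite (bigID (fun v => v \in C)) /= [X in _ + X]big1 ?addn0; last first.
  by move=> v; rewrite inE -eqn0Ngt => /eqP.
have hallv : forall v, all (fun w => bP (okfrom G n eps i k w /\ trace_eq G (w k) t) && Pv v w)
    (filter (Pv v) ws) by move=> v; exact: all_filter_and.
have hhead : forall v, v \in C -> trace_eq G t (v :: g v).
  move=> v; rewrite inE => hv.
  have /andP [/bPP [_ h1] /bPP h2] := all_nthP x0 (hallv v) 0 hv.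
  exact: trace_trans (trace_sym Gsym h1) h2.
case: (posnP (size ws)) => [s0|spos].
  by rewrite big1 // => v _; move/size0nil: s0 => ->.
have hsize : size t + count id (drop k eps) = count negb (drop k eps).
  have /bPP [ok0 h0] := all_nthP x0 hall 0 spos.
  rewrite -(trace_size h0); exact: (size_prof Hsz hk ok0).
apply: leq_trans (Hdn k t g C kn (negbT he) hsize hhead).
apply: leq_sum => v hv; apply: (IH k.+1) => //; first lia.
  apply: sub_all (hallv v) => w /andP [/bPP [ok hw] /bPP hvw]; apply/bPP.
  split; first exact: okS.
  apply: (trace_cancel Girr (v := v)).
  apply: trace_trans (trace_sym Gsym hvw) _.
  exact: trace_trans hw (hhead v hv).
apply: pairwise_sub_all (hallv v) (pairwise_filter _ hpw) _.
move=> a b /andP [Qa _] /andP [Qb _] /bPP nab; apply/bPP => e.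
exact: nab (eqS _ _ Qa Qb e).
Qed.

Lemma cstar_ge_clique L (G : rel 'I_L) (C : {set 'I_L}) v :
  clique G C -> v \in C -> #|C| <= cstar G v.
Proof. move=> cC vC; apply: (leq_bigmax_cond (P := fun S => clique G S && (v \in S))); by rewrite cC. Qed.

Lemma cstar_gt0 L (G : rel 'I_L) v : 0 < cstar G v.
Proof.
apply: leq_trans (cstar_ge_clique (C := [set v]) _ _); last by rewrite in_set1.
  by rewrite cards1.
apply/forallP => x; apply/implyP; rewrite in_set1 => /eqP ->.
apply/forallP => y; apply/implyP; rewrite in_set1 => /eqP ->; by rewrite eqxx.
Qed.

Lemma cstar_le L (G : rel 'I_L) v : cstar G v <= clique_number G.
Proof.
apply/bigmax_leqP => S /andP [cS _].
exact: (leq_bigmax_cond (P := fun S => clique G S)).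
Qed.

Lemma prod_const_count (I : Type) (r : seq I) (P : pred I) c :
  \prod_(x <- r | P x) c = c ^ count P r.
Proof.
elim: r => [|x r IH]; first by rewrite big_nil.
by rewrite big_cons IH /=; case: (P x) => //=; rewrite expnS.
Qed.

Lemma clique_of L (G : rel 'I_L) (Gsym : symmetric G) (Girr : irreflexive G)
   t (g : 'I_L -> seq 'I_L) (C : {set 'I_L}) :
  (forall v, v \in C -> trace_eq G t (v :: g v)) -> clique G C.
Proof.
move=> hh; apply/forallP => u; apply/implyP => hu; apply/forallP => v; apply/implyP => hv.
apply/implyP => uv; apply: (trace_levi Gsym Girr (a := g u) (b := g v)) uv.
exact: trace_trans (trace_sym Gsym (hh u hu)) (hh v hv).
Qed.

Theorem proposition4p1 (L : nat) (G : rel 'I_L)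
  (Gsym : symmetric G) (Girr : irreflexive G)
  (p : nat) (hp : 1 <= p) (eps : seq bool) (heps : dyck p eps)
  (i : nat -> 'I_L) (ws : seq (nat -> seq 'I_L))
  (hws : distinct_paths_in G p eps i ws) :
  size ws <= minn (\prod_(1 <= k < p.*2.+1 | eps_at eps k) cstar G (i k)) p`! /\
  size ws <= minn (clique_number G ^ p) p`!.
Proof.
set n := p.*2.
case: heps => Hsz [_ Hcnt].
have Hc : count negb eps = p.
  have := count_predC id eps; rewrite Hsz -/n => e.
  have e' : count id eps + count negb eps = n by rewrite -e.
  rewrite /n -addnn in e'; lia.
have hall : all (fun w => bP (okfrom G n eps i 0 w /\ trace_eq G (w 0) [::])) ws.
  apply/(all_nthP (fun _ => [::])) => a ha; apply/bPP.
  have [h0 [hn [hadj [hsz hup]]]] := hws.1 a ha.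
  split=> //; split=> // j hj; split; [apply: hadj|split; [apply: hsz|apply: hup]]; lia.
have hpw : pairwise (fun a b => bP (~ eqfrom G n 0 a b)) ws.
  apply/(pairwiseP (fun _ => [::])) => a b ha hb hab; apply/bPP => e.
  apply: (hws.2 a b ha hb); first by rewrite neq_ltn hab.
  move=> j hj; apply: e; lia.
pose fc t k := \prod_(x <- t) cstar G x * \prod_(k.+1 <= j < n.+1 | eps_at eps j) cstar G (i j).
have B1 : size ws <= fc [::] 0.
  apply: (@gen L G Gsym Girr n eps i fc Hsz _ _ _ n 0 [::] ws _ hall hpw) => //.
  - move=> t k; rewrite muln_gt0 !prodn_gt0 // => *; exact: cstar_gt0.
  - move=> k t kn he; rewrite /fc big_cons (big_ltn_cond _ (m := k.+1)) ?ltnS // he.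
    by rewrite mulnCA mulnA.
  - move=> k t g C kn he _ hh; rewrite /fc (big_ltn_cond _ (m := k.+1)) ?ltnS // (negbTE he).
    set R := \prod_(_ <= _ < _ | _) _.
    have cC := clique_of Gsym Girr hh.
    have E : forall v, v \in C -> \prod_(x <- t) cstar G x = cstar G v * \prod_(x <- g v) cstar G x.
      by move=> v hv; rewrite (perm_big _ (trace_perm (hh v hv))) big_cons.
    case: (posnP #|C|) => [c0|cpos].
      by rewrite big1 // => v hv; move: c0 => /eqP; rewrite cards_eq0 => /eqP C0; rewrite C0 inE in hv.
    rewrite -(leq_pmul2r cpos) big_distrl /=.
    apply: leq_trans (_ : \sum_(v in C) (\prod_(x <- t) cstar G x * R) <= _).
      apply: leq_sum => v hv; rewrite (E v hv) -mulnA [X in _ <= X]mulnC.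
      have hc := cstar_ge_clique cC hv.
      apply: leq_trans (leq_mul (leqnn _) (leq_mul (leqnn _) hc)) _.
      by rewrite mulnCA (mulnC (cstar G v)).
    by rewrite sum_nat_const mulnC.
have B2 : size ws <= p`!.
  pose ff := fun (_ : seq 'I_L) k => (count negb (drop k eps))`!.
  have -> : p`! = ff [::] 0 by rewrite /ff drop0 Hc.
  apply: (@gen L G Gsym Girr n eps i ff Hsz _ _ _ n 0 [::] ws _ hall hpw) => //.
  - by move=> t k; exact: fact_gt0.
  - move=> k t kn he; rewrite /ff (drop_nth false (n := k)) ?Hsz //.
    by move: he; rewrite /eps_at /= => ->.
  - move=> k t g C kn he hs hh; rewrite /ff (drop_nth false (n := k)) ?Hsz // in hs *.
    move: he hs; rewrite /eps_at /= => /negbTE -> /= hs.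
    rewrite sum_nat_const factS leq_mul2r; apply/orP; right.
    have : #|C| <= size t.
      apply: leq_trans (card_size t); apply: subset_leq_card; apply/subsetP => v hv.
      by rewrite (perm_mem (trace_perm (hh v hv))) inE eqxx.
    move=> h; apply: leq_trans h _; move: hs; rewrite add0n add1n => <-; exact: leq_addr.
have Bp : \prod_(1 <= k < n.+1 | eps_at eps k) cstar G (i k) <= clique_number G ^ p.
  apply: leq_trans (leq_prod (E2 := fun _ => clique_number G) _) _.
    by move=> k _; exact: cstar_le.
  rewrite prod_const_count.
  have -> : count (fun k => eps_at eps k) (index_iota 1 n.+1) = p.
    rewrite /index_iota subSS subn0 -[1]/(1 + 0) iotaDl count_map.
    rewrite -Hc -Hcnt /n -Hsz -{3}(mkseq_nth false eps) /mkseq count_map.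
    by apply: eq_count => k.
  exact: leqnn.
split; rewrite leq_min ?B2 andbT //.
  by move: B1; rewrite /fc big_nil mul1n.
apply: leq_trans Bp; by move: B1; rewrite /fc big_nil mul1n.
Qed.
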